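(* Let $d\in\mathbb{N}$ and let $(A,B),(C,D)$ be pairs of complex $d\times d$ matrices with $\operatorname{diag}(A)=\operatorname{diag}(B)$ and $\operatorname{diag}(C)=\operatorname{diag}(D)$. Suppose that, for $i=1,2$, the linear maps $\Phi^{(i)}_{(A,B)}$ and $\Phi^{(i)}_{(C,D)}$ on $\mathcal{M}_d(\mathbb{C})$ are PPT. Then for all $i,j\in\{1,2\}$ the composition $\Phi^{(i)}_{(A,B)}\circ\Phi^{(j)}_{(C,D)}$ is entanglement breaking.
   Context: $\mathcal{M}_d(\mathbb{C})$ denotes the complex $d\times d$ matrices, $\odot$ the entrywise (Hadamard) product, $X^\top$ the transpose in the standard basis, $\operatorname{diag}(X)$ both the column vector of diagonal entries of $X$ (written $|\operatorname{diag}X\rangle$) and, for a vector $v$, $\operatorname{diag}(v)$ is the diagonal matrix with diagonal $v$; for a matrix $B$, $\operatorname{diag}B$ denotes the diagonal matrix with the same diagonal as $B$ and $\widetilde B=B-\operatorname{diag}B$. For a pair $(A,B)$ with equal diagonals, define $\Phi^{(1)}_{(A,B)}(X)=\operatorname{diag}(A|\operatorname{diag}X\rangle)+\widetilde B\odot X^\top$ and $\Phi^{(2)}_{(A,B)}(X)=\operatorname{diag}(A|\operatorname{diag}X\rangle)+\widetilde B\odot X$. A linear map $\Phi:\mathcal{M}_d(\mathbb{C})\to\mathcal{M}_d(\mathbb{C})$ is completely positive if $\mathrm{id}_n\otimes\Phi$ maps positive semidefinite matrices to positive semidefinite matrices for all $n$; completely copositive if $\Phi\circ\top$ is completely positive;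 PPT if it is both completely positive and completely copositive. $\Phi$ is entanglement breaking if $(\mathrm{id}\otimes\Phi)(X)$ is separable (in the convex hull of $P\otimes Q$ with $P,Q$ positive semidefinite) for every positive semidefinite $X\in\mathcal{M}_d(\mathbb{C})\otimes\mathcal{M}_d(\mathbb{C})$. *)

(* Defs.v *)
From HB Require Import structures.
From mathcomp Require Import all_boot all_order all_algebra.
From mathcomp Require Import reals.
From mathcomp Require Import complex mxtens.

Set Implicit Arguments.
Unset Strict Implicit.
Unset Printing Implicit Defensive.

Import Order.TTheory GRing.Theory Num.Theory.
Local Open Scope ring_scope.

Section QDefs.
Variable C : numClosedFieldType.

Definition adjmx m n (A : 'M[C]_(m, n)) : 'M[C]_(n, m) := (map_mx Num.conj A)^T.

Definition psdmx n (A : 'M[C]_n) : Prop :=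
  adjmx A = A /\ forall v : 'cV[C]_n, 0 <= (adjmx v *m A *m v) 0 0.

Definition hadamard m n (A B : 'M[C]_(m, n)) : 'M[C]_(m, n) :=
  \matrix_(i, j) (A i j * B i j).

Definition diagvec n (X : 'M[C]_n) : 'cV[C]_n := \col_i X i i.

Definition diagpart n (B : 'M[C]_n) : 'M[C]_n := diag_mx (diagvec B)^T.
Definition offdiag n (B : 'M[C]_n) : 'M[C]_n := B - diagpart B.

Definition Phi1 d (A B : 'M[C]_d) (X : 'M[C]_d) : 'M[C]_d :=
  diag_mx (A *m diagvec X)^T + hadamard (offdiag B) X^T.
Definition Phi2 d (A B : 'M[C]_d) (X : 'M[C]_d) : 'M[C]_d :=
  diag_mx (A *m diagvec X)^T + hadamard (offdiag B) X.

(* Phi^(i) for i : 'I_2, index 0 <-> Phi^(1), index 1 <-> Phi^(2) *)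
Definition PhiI d (k : 'I_2) (A B : 'M[C]_d) : 'M[C]_d -> 'M[C]_d :=
  if k == 0 then Phi1 A B else Phi2 A B.

(* id_n (x) Phi on M_n (x) M_d = M_(n*d) (Kronecker index convention of tensmx):
   sum_{a,b} E_ab (x) Phi(X_ab) where X_ab is the (a,b) block of X. *)
Definition blockmx n d (X : 'M[C]_(n * d)) (a b : 'I_n) : 'M[C]_d :=
  \matrix_(i, j) X (mxtens_index (a, i)) (mxtens_index (b, j)).

Definition idtens n d (Phi : 'M[C]_d -> 'M[C]_d) (X : 'M[C]_(n * d)) : 'M[C]_(n * d) :=
  \sum_(a < n) \sum_(b < n) (delta_mx a b *t Phi (blockmx X a b)).

Definition completely_positive d (Phi : 'M[C]_d -> 'M[C]_d) : Prop :=
  forall (n : nat) (X : 'M[C]_(n * d)), psdmx X -> psdmx (idtens Phi X).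

Definition completely_copositive d (Phi : 'M[C]_d -> 'M[C]_d) : Prop :=
  completely_positive (fun X => Phi X^T).

Definition PPT d (Phi : 'M[C]_d -> 'M[C]_d) : Prop :=
  completely_positive Phi /\ completely_copositive Phi.

(* separable: in the convex hull of {P (x) Q : P, Q psd}; since this set is a cone
   containing 0, the convex hull is the set of finite sums of such products. *)
Definition separable n m (X : 'M[C]_(n * m)) : Prop :=
  exists (k : nat) (P : 'I_k -> 'M[C]_n) (Q : 'I_k -> 'M[C]_m),
    (forall i, psdmx (P i)) /\ (forall i, psdmx (Q i)) /\
    X = \sum_(i < k) (P i *t Q i).

Definition entanglement_breaking d (Phi : 'M[C]_d -> 'M[C]_d) : Prop :=
  forall X : 'M[C]_(d * d), psdmx X -> separable (idtens Phi X).

End QDefs.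

(* Main.v *)
Require Import Defs.
From HB Require Import structures.
From mathcomp Require Import all_boot all_order all_algebra.
From mathcomp Require Import reals.
From mathcomp Require Import complex mxtens.
From mathcomp Require Import ring.
Set Implicit Arguments.
Unset Strict Implicit.
Unset Printing Implicit Defensive.
Import Order.TTheory GRing.Theory Num.Theory.
Local Open Scope ring_scope.

Section Work.
Variable C : numClosedFieldType.

Lemma adjmxE m n (A : 'M[C]_(m,n)) i j : adjmx A i j = (A j i)^*.
Proof. by rewrite /adjmx !mxE. Qed.

Lemma adjmxK m n (A : 'M[C]_(m,n)) : adjmx (adjmx A) = A.
Proof. by apply/matrixP=> i j; rewrite !adjmxE conjCK. Qed.

Lemma adjmxM m n p (A : 'M[C]_(m,n)) (B : 'M[C]_(n,p)) :
  adjmx (A *m B) = adjmx B *m adjmx A.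
Proof. by rewrite /adjmx map_mxM trmx_mul. Qed.

Lemma psd_congr m n (X : 'M[C]_m) (S : 'M[C]_(m,n)) :
  psdmx X -> psdmx (adjmx S *m X *m S).
Proof.
case=> hX hq; split.
  by rewrite !adjmxM adjmxK hX mulmxA.
move=> v; have := hq (S *m v).
by rewrite adjmxM !mulmxA.
Qed.

Lemma psd_1 (M : 'M[C]_1) : 0 <= M 0 0 -> psdmx M.
Proof.
move=> h; have eM : M = (M 0 0)%:M.
  by apply/matrixP=> i j; rewrite !ord1 mxE eqxx mulr1n.
split.
  by apply/matrixP=> i j; rewrite adjmxE !ord1 geC0_conj.
move=> v; rewrite eM !mxE big_ord1 !mxE big_ord1 !mxE eqxx mulr1n.
idtac.
by rewrite mulrAC mulr_ge0 // mulrC mul_conjC_ge0.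
Qed.

Lemma psd_rank1 n (lam : C) (g : 'cV[C]_n) : 0 <= lam ->
  psdmx (lam *: (g *m adjmx g)).
Proof.
move=> hl.
have -> : lam *: (g *m adjmx g) = adjmx (adjmx g) *m (lam%:M : 'M_1) *m adjmx g.
  by rewrite adjmxK mul_mx_scalar scalemxAl.
apply: psd_congr; apply: psd_1; by rewrite mxE eqxx mulr1n.
Qed.


Lemma sum_if1 n (b : 'I_n) (F : 'I_n -> C) :
  \sum_a (if a == b then F a else 0) = F b.
Proof. by rewrite -big_mkcond big_pred1_eq. Qed.

Lemma sum_tens m n (G : 'I_(m * n) -> C) :
  \sum_p G p = \sum_(a < m) \sum_(i < n) G (mxtens_index (a, i)).
Proof.
rewrite pair_big /=.
rewrite (eq_bigr (fun x => G (@mxtens_index m n x))); last by case.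
apply: reindex => /=.
by exists (@mxtens_unindex m n) => p _; rewrite (mxtens_indexK, mxtens_unindexK).
Qed.

Lemma qf_entry m n p (u : 'M[C]_(m, n)) (Y : 'M[C]_m) (v : 'M[C]_(m, p)) i j :
  (adjmx u *m Y *m v) i j = \sum_a \sum_b (u a i)^* * Y a b * v b j.
Proof.
rewrite mxE exchange_big; apply: eq_bigr => b _; rewrite mxE mulr_suml.
by apply: eq_bigr => a _; rewrite adjmxE.
Qed.

Lemma sep_fin n m (I : finType) (P : I -> 'M[C]_n) (Q : I -> 'M[C]_m) :
  (forall i, psdmx (P i)) -> (forall i, psdmx (Q i)) ->
  separable (\sum_i (P i *t Q i)).
Proof.
move=> hP hQ; exists #|I|, (fun i => P (enum_val i)), (fun i => Q (enum_val i)).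
split; first by move=> i; apply: hP.
split; first by move=> i; apply: hQ.
by rewrite (big_enum_val (fun i => P i *t Q i)).
Qed.


Lemma sum_if2 m n (a : 'I_m) (b : 'I_n) (G : 'I_m -> 'I_n -> C) :
  \sum_a' \sum_b' (if (a == a') && (b == b') then G a' b' else 0) = G a b.
Proof.
rewrite (bigD1 a) //= [X in _ + X]big1 ?addr0.
  rewrite (bigD1 b) //= !eqxx [X in _ + X]big1 ?addr0 //= => b' /negbTE.
  by rewrite eq_sym => ->.
move=> a' /negbTE; rewrite eq_sym => h; apply: big1 => b' _.
by rewrite h.
Qed.

Definition liftF d n (f : 'cV[C]_d) : 'M[C]_(n * d, n) :=
  \matrix_(p, a) (if (mxtens_unindex p).1 == a then f (mxtens_unindex p).2 0 else 0).

Lemma liftF_qf d n (f : 'cV[C]_d) (X : 'M[C]_(n * d)) a b :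
  (adjmx (liftF n f) *m X *m liftF n f) a b = (adjmx f *m blockmx X a b *m f) 0 0.
Proof.
rewrite !qf_entry sum_tens.
rewrite (eq_bigr (fun a1 => if a1 == a then \sum_i \sum_b0 (f i 0)^* * blockmx X a b i b0 * f b0 0 else 0)).
  by rewrite sum_if1.
move=> a1 _.
have [->|ne] := eqVneq a1 a.
  apply: eq_bigr => i _; rewrite sum_tens.
  rewrite (eq_bigr (fun b1 => if b1 == b then \sum_j (f i 0)^* * blockmx X a b i j * f j 0 else 0)).
    by rewrite sum_if1.
  move=> b1 _; have [->|neb] := eqVneq b1 b.
    by apply: eq_bigr => j _; rewrite !mxE !mxtens_indexK /= !eqxx.
  by apply: big1 => j _; rewrite !mxE !mxtens_indexK /= (negbTE neb) mulr0.
apply: big1 => i _; apply: big1 => p _.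
by rewrite !mxE !mxtens_indexK /= (negbTE ne) rmorph0 !mul0r.
Qed.

Lemma sep_mp d (Psi : 'M[C]_d -> 'M[C]_d) (I : finType) (f : I -> 'cV[C]_d)
  (Q : I -> 'M[C]_d) :
  (forall r, psdmx (Q r)) ->
  (forall Y, Psi Y = \sum_r (adjmx (f r) *m Y *m f r) 0 0 *: Q r) ->
  forall n (X : 'M[C]_(n * d)), psdmx X -> separable (idtens Psi X).
Proof.
move=> hQ hPsi n X hX.
have -> : idtens Psi X =
    \sum_r ((adjmx (liftF n (f r)) *m X *m liftF n (f r)) *t Q r).
  apply/matrixP => p q.
  rewrite -[p](@mxtens_unindexK n d) -[q](@mxtens_unindexK n d).
  move: (mxtens_unindex p) (mxtens_unindex q) => [a i] [b j].
  rewrite /idtens !summxE.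
  under eq_bigr do rewrite summxE.
  under eq_bigr do under eq_bigr do rewrite tensmxE mxE mulr_natl mulrb.
  rewrite sum_if2 hPsi summxE.
  apply: eq_bigr => r _; rewrite tensmxE liftF_qf mxE //.
by apply: sep_fin => r //; apply: psd_congr.
Qed.


Lemma sum_delta_r n (l : 'I_n) (F : 'I_n -> C) : \sum_b F b * (b == l)%:R = F l.
Proof.
rewrite -[RHS]sum_if1; apply: eq_bigr => b _; by rewrite mulr_natr mulrb.
Qed.

Lemma sum_delta_l n (l : 'I_n) (F : 'I_n -> C) : \sum_b (b == l)%:R * F b = F l.
Proof.
rewrite -[RHS]sum_if1; apply: eq_bigr => b _; by rewrite mulr_natl mulrb.
Qed.

Definition ev n (k : 'I_n) : 'cV[C]_n := delta_mx k 0.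

Lemma evE n (k : 'I_n) i j : ev k i j = (i == k)%:R.
Proof. by rewrite /ev mxE ord1 eqxx andbT. Qed.

Lemma qf_delta n (M : 'M[C]_n) k l : (adjmx (ev k) *m M *m ev l) 0 0 = M k l.
Proof.
rewrite qf_entry.
under eq_bigr => a _ do under eq_bigr => b _ do rewrite !evE rmorph_nat.
under eq_bigr => a _ do rewrite sum_delta_r.
by rewrite sum_delta_l.
Qed.

Lemma adjmxD m n (A B : 'M[C]_(m,n)) : adjmx (A + B) = adjmx A + adjmx B.
Proof. by apply/matrixP => i j; rewrite !(adjmxE, mxE) rmorphD. Qed.

Lemma adjmxZ m n (x : C) (A : 'M[C]_(m,n)) : adjmx (x *: A) = x^* *: adjmx A.
Proof. by apply/matrixP => i j; rewrite !(adjmxE, mxE) rmorphM. Qed.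

Lemma entryD m n (A B : 'M[C]_(m,n)) i j : (A + B) i j = A i j + B i j.
Proof. by rewrite mxE. Qed.
Lemma entryZ m n x (A : 'M[C]_(m,n)) i j : (x *: A) i j = x * A i j.
Proof. by rewrite mxE. Qed.

Lemma qf_two n (M : 'M[C]_n) k l x y :
  let u := x *: ev k + y *: ev l in
  (adjmx u *m M *m u) 0 0 =
  x^* * x * M k k + x^* * y * M k l + y^* * x * M l k + y^* * y * M l l.
Proof.
rewrite /= adjmxD !adjmxZ !mulmxDl !mulmxDr -!scalemxAl -!scalemxAr.
rewrite !entryD !entryZ !qf_delta; ring.
Qed.

Lemma psd_entries n (M : 'M[C]_n) p q : psdmx M -> p != q ->
  [/\ M q p = (M p q)^*, 0 <= M p p & M p q * (M p q)^* <= M p p * M q q].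
Proof.
case=> hH hq npq.
have herm : forall i j, M j i = (M i j)^*.
  by move=> i j; rewrite -[in LHS]hH adjmxE.
have hpp : forall i, 0 <= M i i by move=> i; have := hq (ev i); rewrite qf_delta.
have rpp : forall i, (M i i)^* = M i i by move=> i; apply: geC0_conj.
split; [exact: herm | exact: hpp | ].
set a := M p p; set c := M q q; set b := M p q.
have hqp : M q p = b^* by apply: herm.
have Q2 : forall x y, 0 <= x^* * x * a + x^* * y * b + y^* * x * b^* + y^* * y * c.
  by move=> x y; have := hq (x *: ev p + y *: ev q); rewrite qf_two -hqp.
have ha := hpp p; have hc := hpp q.
have cN : forall x : C, (- x)^* = - x^* by move=> x; rewrite rmorphN.
have c1 : (1 : C)^* = 1 by rewrite rmorph1.
have [hac|hac] := eqVneq (a + c) 0.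
  have a0 : a = 0.
    have ac : a = - c by apply/eqP; rewrite -addr_eq0 hac.
    by apply/eqP; rewrite eq_le ha andbT {1}ac oppr_le0.
  have c0 : c = 0 by move: hac; rewrite a0 add0r.
  have := Q2 1 (- b^*); rewrite a0 c0 cN conjCK c1 [0 * 0]mulr0.
  have -> : 1 * 1 * 0 + 1 * - b^* * b + - b * 1 * b^* + - b * - b^* * 0 =
     - (b * b^* + b * b^*) by ring.
  rewrite oppr_ge0 => h; apply: le_trans h.
  by rewrite lerDl mul_conjC_ge0.
have hacp : 0 < a + c by rewrite lt_def hac addr_ge0.
have h1 := Q2 c (- b^*); have h2 := Q2 (- b) a.
rewrite -subr_ge0; rewrite -(pmulr_rge0 _ hacp).
have e1 : c^* = c by apply: rpp.
have e2 : a^* = a by apply: rpp.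
move: h1 h2; rewrite !cN conjCK e1 e2 => h1 h2.
have -> : (a + c) * (a * c - b * b^*) =
   (- b^* * - b * a + - b^* * a * b + a * - b * b^* + a * a * c) +
   (c * c * a + c * - b^* * b + - b * c * b^* + - b * - b^* * c) by ring.
exact: addr_ge0.
Qed.


Lemma idtensE n d (Phi : 'M[C]_d -> 'M[C]_d) (X : 'M[C]_(n * d)) a i b j :
  idtens Phi X (mxtens_index (a, i)) (mxtens_index (b, j)) = Phi (blockmx X a b) i j.
Proof.
rewrite /idtens !summxE.
under eq_bigr do rewrite summxE.
under eq_bigr do under eq_bigr do rewrite tensmxE mxE mulr_natl mulrb.
by rewrite sum_if2.
Qed.

Definition choi d (Phi : 'M[C]_d -> 'M[C]_d) : 'M[C]_(d * d) :=
  \matrix_(p, q) Phi (delta_mx (mxtens_unindex p).1 (mxtens_unindex q).1)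
                     (mxtens_unindex p).2 (mxtens_unindex q).2.

Lemma choiE d (Phi : 'M[C]_d -> 'M[C]_d) a i b j :
  choi Phi (mxtens_index (a, i)) (mxtens_index (b, j)) = Phi (delta_mx a b) i j.
Proof. by rewrite mxE !mxtens_indexK. Qed.

Lemma choi_psd d (Phi : 'M[C]_d -> 'M[C]_d) :
  completely_positive Phi -> psdmx (choi Phi).
Proof.
move=> hcp.
pose w : 'cV[C]_(d * d) := \col_p (((mxtens_unindex p).1 == (mxtens_unindex p).2)%:R).
have hw : psdmx (w *m adjmx w) by rewrite -[w *m _]scale1r; apply: psd_rank1.
have := hcp d _ hw.
have -> : idtens Phi (w *m adjmx w) = choi Phi; last by [].
apply/matrixP => p q.
rewrite -[p](@mxtens_unindexK d d) -[q](@mxtens_unindexK d d).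
move: (mxtens_unindex p) (mxtens_unindex q) => [a i] [b j].
rewrite idtensE choiE; congr (Phi _ i j).
apply/matrixP => i' j'; rewrite !mxE big_ord1 !mxE !mxtens_indexK /= rmorph_nat.
by rewrite -natrM mulnb [i' == a]eq_sym [j' == b]eq_sym.
Qed.


Lemma offdiagE d (B : 'M[C]_d) i j : offdiag B i j = if i == j then 0 else B i j.
Proof.
rewrite /offdiag /diagpart !mxE; case: eqVneq => [->|_]; last by rewrite mulr0n subr0.
by rewrite mulr1n subrr.
Qed.

Lemma diagE d (A X : 'M[C]_d) i j :
  diag_mx (A *m diagvec X)^T i j = if i == j then \sum_m A i m * X m m else 0.
Proof.
rewrite !mxE; case: eqVneq => _; last by rewrite mulr0n.
by rewrite mulr1n; apply: eq_bigr => m _; rewrite mxE.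
Qed.

Lemma PhiIE d k (A B X : 'M[C]_d) i j :
  PhiI k A B X i j = if i == j then \sum_m A i m * X m m
                     else B i j * (if k == 0 then X j i else X i j).
Proof.
rewrite /PhiI; case: (k == 0); rewrite /Phi1 /Phi2 entryD diagE /hadamard mxE offdiagE;
  case: eqVneq => _; by rewrite ?mul0r ?addr0 ?add0r ?mxE.
Qed.

Lemma compE d k k' (A B C' D : 'M[C]_d) Y p q :
  (PhiI k A B \o PhiI k' C' D) Y p q =
  if p == q then \sum_m (A *m C') p m * Y m m
  else B p q * (if k == 0 then D q p else D p q) * (if k != k' then Y q p else Y p q).
Proof.
rewrite /= PhiIE; case: eqVneq => [->|npq].
  rewrite (eq_bigr (fun m => \sum_n A q m * (C' m n * Y n n))); last first.
    by move=> m _; rewrite PhiIE eqxx mulr_sumr.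
  rewrite exchange_big; apply: eq_bigr => n _; rewrite mxE mulr_suml.
  by apply: eq_bigr => m _; rewrite mulrA.
have nqp : q != p by rewrite eq_sym.
rewrite !PhiIE ?(negbTE npq) ?(negbTE nqp).
have -> : (k != k') = ((k == 0) != (k' == 0)).
  by case: k => [[|[|//]]] ko; case: k' => [[|[|//]]] ko'.
by case: (k == 0); case: (k' == 0); rewrite /= mulrA.
Qed.


Lemma psd_diag n (M : 'M[C]_n) p : psdmx M -> 0 <= M p p.
Proof. by case=> _ hq; have := hq (ev p); rewrite qf_delta. Qed.

Lemma PhiI_delta_diag d k (A B : 'M[C]_d) a i :
  PhiI k A B (delta_mx a a) i i = A i a.
Proof.
rewrite PhiIE eqxx.
under eq_bigr => m _ do rewrite mxE andbb.
by rewrite sum_delta_r.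
Qed.

Lemma PhiI_delta_off d k (A B : 'M[C]_d) a b :
  a != b -> PhiI k A B (delta_mx a b) (if k == 0 then b else a) (if k == 0 then a else b) =
  (if k == 0 then B b a else B a b).
Proof.
move=> nab; have nba : b != a by rewrite eq_sym.
rewrite PhiIE; case: (k == 0); rewrite ?(negbTE nab) ?(negbTE nba) mxE !eqxx mulr1 //.
Qed.

Lemma idx_neq n m (a b : 'I_n) (i j : 'I_m) : (a, i) != (b, j) ->
  mxtens_index (a, i) != mxtens_index (b, j).
Proof. by apply: contra => /eqP /(can_inj (@mxtens_indexK n m)) ->. Qed.

Lemma pair_conds d (A B : 'M[C]_d) :
  completely_positive (PhiI 0 A B) -> completely_positive (PhiI 1 A B) ->
  [/\ forall i j, 0 <= A i j,
      forall i j, i != j -> B j i = (B i j)^*,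
      forall i j, i != j -> B i j * (B i j)^* <= A i i * A j j &
      forall i j, i != j -> B i j * (B i j)^* <= A i j * A j i].
Proof.
move=> /choi_psd h1 /choi_psd h2.
split.
- move=> i j; have := psd_diag (mxtens_index (j, i)) h2.
  by rewrite choiE PhiI_delta_diag.
- move=> i j nij.
  have := psd_entries h2 (idx_neq (a := i) (b := j) (i := i) (j := j) _).
  case=> [|e _ _]; first by apply: contra nij => /eqP [->].
  by move: e; rewrite !choiE (PhiI_delta_off 1 A B nij) (PhiI_delta_off 1 A B (a := j) (b := i)) 1?eq_sym.
- move=> i j nij.
  have := psd_entries h2 (idx_neq (a := i) (b := j) (i := i) (j := j) _).
  case=> [|_ _ e]; first by apply: contra nij => /eqP [->].
  by move: e; rewrite !choiE (PhiI_delta_off 1 A B nij) !PhiI_delta_diag.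
- move=> i j nij.
  have := psd_entries h1 (idx_neq (a := j) (b := i) (i := i) (j := j) _).
  case=> [|_ _ e]; first by apply: contra nij => /eqP [_ ->].
  have nji : j != i by rewrite eq_sym.
  by move: e; rewrite !choiE (PhiI_delta_off 0 A B nji) !PhiI_delta_diag.
Qed.

Definition w4 (r : 'I_4) : C := 'i ^+ r.

Lemma w4_neq0 r : w4 r != 0.
Proof. by rewrite expf_neq0 // neq0Ci. Qed.

Lemma w4_conj r : (w4 r)^* = (w4 r)^-1.
Proof.
have cX : forall (x : C) n, (x ^+ n)^* = (x^*) ^+ n by move=> x n; rewrite rmorphXn.
by rewrite /w4 cX conjCi -invCi exprVn.
Qed.

Lemma phase4 (c0 c1 c2 d0 d1 d2 : C) :
  \sum_(r < 4) (c0 + w4 r * c1 + (w4 r)^-1 * c2) * (d0 + (w4 r)^-1 * d1 + w4 r * d2)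
  = 4 * (c0 * d0 + c1 * d1 + c2 * d2).
Proof.
rewrite !big_ord_recl big_ord0 /w4 /=.
rewrite (_ : bump 0 0 = 1) // (_ : bump 0 1 = 2) // (_ : bump 0 2 = 3) //.
have e3 : 'i ^+ 3 = - 'i :> C by rewrite exprS sqrCi mulrN1.
rewrite expr0 expr1 sqrCi e3 invr1 invCi invrN1 invrN invCi opprK.
set j : C := 'i.
transitivity (4 * (c0 * d0 + c1 * d1 + c2 * d2) + 2 * (j * j + 1) * (c1 - c2) * (d2 - d1)).
  by ring.
by rewrite mulCii addNr mulr0 !mul0r addr0.
Qed.

Lemma cD (x y : C) : (x + y)^* = x^* + y^*. Proof. by rewrite rmorphD. Qed.
Lemma cM (x y : C) : (x * y)^* = x^* * y^*. Proof. by rewrite rmorphM. Qed.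
Lemma cn n : (n%:R : C)^* = n%:R. Proof. by rewrite rmorph_nat. Qed.
Lemma cV (x : C) : (x^-1)^* = (x^*)^-1. Proof. by rewrite fmorphV. Qed.
Lemma cS (x : C) : 0 <= x -> (sqrtC x)^* = sqrtC x.
Proof. by move=> h; rewrite geC0_conj // sqrtC_ge0. Qed.

Section Core.
Variables (d : nat) (tau : bool) (N : 'M[C]_d) (al de : 'I_d -> 'I_d -> C).
Hypothesis al_ge0 : forall k l, 0 <= al k l.
Hypothesis de_ge0 : forall k l, 0 <= de k l.

Definition sx k l := sqrtC (al k l).
Definition sy k l := sqrtC (de k l).
Definition zc k l := N k l / 2 / (sx k l * sy k l).
Definition wh (r : 'I_4) := if tau then (w4 r)^* else w4 r.
Definition fo k l r : 'cV[C]_d := sx k l *: ev k + (w4 r * sy k l) *: ev l.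
Definition go k l r : 'cV[C]_d := ev k + (wh r * (zc k l)^*) *: ev l.
Definition Qo k l r : 'M[C]_d := ((k != l)%:R / 4) *: (go k l r *m adjmx (go k l r)).

Definition Tf (Y : 'M[C]_d) k l (p q : 'I_d) : C :=
  let x := sx k l in let y := sy k l in let z := zc k l in
  (x * x * Y k k + y * y * Y l l) *
     ((p == k)%:R * (q == k)%:R + z * z^* * ((p == l)%:R * (q == l)%:R)) +
  x * y * Y k l * (if tau then z^* * ((p == l)%:R * (q == k)%:R) else z * ((p == k)%:R * (q == l)%:R)) +
  x * y * Y l k * (if tau then z * ((p == k)%:R * (q == l)%:R) else z^* * ((p == l)%:R * (q == k)%:R)).

Lemma T_inner Y k l p q :
  \sum_r (adjmx (fo k l r) *m Y *m fo k l r) 0 0 * Qo k l r p q = (k != l)%:R * Tf Y k l p q.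
Proof.
have hx : (sx k l)^* = sx k l by apply: cS.
have hy : (sy k l)^* = sy k l by apply: cS.
rewrite (eq_bigr (fun r => (k != l)%:R / 4 *
   ((sx k l * sx k l * Y k k + sy k l * sy k l * Y l l + w4 r * (sx k l * sy k l * Y k l)
        + (w4 r)^-1 * (sx k l * sy k l * Y l k)) *
    ((p == k)%:R * (q == k)%:R + zc k l * (zc k l)^* * ((p == l)%:R * (q == l)%:R)
     + (w4 r)^-1 * (if tau then (zc k l)^* * ((p == l)%:R * (q == k)%:R) else zc k l * ((p == k)%:R * (q == l)%:R))
     + w4 r * (if tau then zc k l * ((p == k)%:R * (q == l)%:R) else (zc k l)^* * ((p == l)%:R * (q == k)%:R)))))).
  rewrite -mulr_sumr phase4 [_ / 4 * _]mulrA divfK ?pnatr_eq0 //.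
move=> r _.
rewrite /fo qf_two /Qo entryZ mxE big_ord1 adjmxE /go !entryD !entryZ !evE.
move: (zc k l) (sx k l) (sy k l) hx hy => z x y hx hy.
rewrite !cD !cM !cn hx hy conjCK /wh.
case: tau; rewrite ?conjCK !w4_conj; have := w4_neq0 r; move: (w4 r) => w hw. all: by field.
Qed.


Lemma sum_pair (T1 T2 : finType) (G : T1 * T2 -> C) :
  \sum_x G x = \sum_a \sum_b G (a, b).
Proof. by rewrite pair_bigA; apply: eq_bigr => -[a b]. Qed.

Lemma sum_delta_r' n (l : 'I_n) (F : 'I_n -> C) : \sum_b F b * (l == b)%:R = F l.
Proof. by rewrite -[RHS](sum_delta_r l); apply: eq_bigr => b _; rewrite eq_sym. Qed.

Lemma sum_delta_l' n (l : 'I_n) (F : 'I_n -> C) : \sum_b (l == b)%:R * F b = F l.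
Proof. by rewrite -[RHS](sum_delta_l l); apply: eq_bigr => b _; rewrite eq_sym. Qed.

Lemma dsum1 n (F : 'I_n -> 'I_n -> C) p q :
  \sum_k \sum_l F k l * ((p == k)%:R * (q == l)%:R) = F p q.
Proof.
under eq_bigr => k _ do under eq_bigr => l _ do rewrite mulrA.
under eq_bigr => k _ do rewrite sum_delta_r'.
by rewrite sum_delta_r'.
Qed.

Lemma dsum2 n (F : 'I_n -> 'I_n -> C) p q :
  \sum_k \sum_l F k l * ((p == l)%:R * (q == k)%:R) = F q p.
Proof.
rewrite exchange_big /=; rewrite -[RHS](dsum1 (fun l k => F k l) p q).
by apply: eq_bigr => l _; apply: eq_bigr => k _.
Qed.

Lemma nat_and (b1 b2 : bool) : (b1%:R * b2%:R : C) = (b1 && b2)%:R.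
Proof. by case: b1; case: b2; rewrite ?mulr1 ?mulr0. Qed.

Definition zz k l := zc k l * (zc k l)^*.
Definition rho (M : 'M[C]_d) p m := M p m - (p != m)%:R * (de p m + al m p * zz m p)
   - (p == m)%:R * \sum_l (p != l)%:R * (al p l + de l p * zz l p).

Definition Iset := (('I_d * 'I_d * 'I_4) + ('I_d * 'I_d))%type.
Definition fI (x : Iset) : 'cV[C]_d :=
  match x with inl (k, l, r) => fo k l r | inr (p, m) => ev m end.
Definition QI (M : 'M[C]_d) (x : Iset) : 'M[C]_d :=
  match x with inl (k, l, r) => Qo k l r | inr (p, m) => rho M p m *: (ev p *m adjmx (ev p)) end.

Lemma core_decomp (M : 'M[C]_d) (Psi : 'M[C]_d -> 'M[C]_d) :
  (forall Y p q, Psi Y p q = if p == q then \sum_m M p m * Y m m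
                            else N p q * (if tau then Y q p else Y p q)) ->
  (forall p q, p != q -> N q p = (N p q)^*) ->
  (forall k l, k != l -> sx k l * sy k l * zc k l = N k l / 2) ->
  forall Y, Psi Y = \sum_x (adjmx (fI x) *m Y *m fI x) 0 0 *: QI M x.
Proof.
move=> HPsi HN Hz Y; apply/matrixP => p q.
rewrite summxE big_sumType /= !sum_pair.
under eq_bigr => k _ do under eq_bigr => l _ do under eq_bigr => r _ do rewrite entryZ.
under eq_bigr => k _ do under eq_bigr => l _ do rewrite T_inner.
under [X in _ + X]eq_bigr => a _ do under eq_bigr => m _ do
  rewrite /= entryZ qf_delta entryZ mxE big_ord1 adjmxE !evE cn.
rewrite HPsi.
have Hzc : forall k l, k != l -> sx k l * sy k l * (zc k l)^* = (N k l)^* / 2.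
  move=> k l nkl.
  rewrite -[sx k l](cS (al_ge0 k l)) -[sy k l](cS (de_ge0 k l)) -!cM Hz //.
  by rewrite cM cV cn.
case: eqVneq => [<-|npq].
  have kl0 : forall k l, k != l -> ((p == k) && (p == l)) = false.
    by move=> k l nkl; apply/negbTE; apply: contra nkl => /andP [/eqP <- /eqP <-].
  have sxx : forall k l, sx k l * sx k l = al k l by move=> k l; rewrite -expr2 sqrtCK.
  have syy : forall k l, sy k l * sy k l = de k l by move=> k l; rewrite -expr2 sqrtCK.
  have T1 : forall k l, (k != l)%:R * Tf Y k l p p =
     (k != l)%:R * (al k l * Y k k + de k l * Y l l) * (p == k)%:R +
     (k != l)%:R * ((al k l * Y k k + de k l * Y l l) * zz k l) * (p == l)%:R.
    move=> k l; case: (eqVneq k l) => [->|nkl]; first by rewrite /= !mul0r addr0.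
    have nlk : l != k by rewrite eq_sym.
    rewrite /Tf !nat_and !andbb (kl0 k l nkl) (kl0 l k nlk) /zz sxx syy /=.
    case: tau; ring.
  under eq_bigr => k _ do under eq_bigr => l _ do rewrite T1.
  under eq_bigr => k _ do rewrite big_split /= -mulr_suml.
  rewrite big_split /= sum_delta_r'.
  under [X in _ + X + _]eq_bigr => k _ do rewrite sum_delta_r'.
  under [X in _ + X]eq_bigr => a _ do under eq_bigr => m _ do rewrite nat_and andbb mulrA.
  under [X in _ + X]eq_bigr => a _ do rewrite -mulr_suml.
  rewrite [X in _ + X]sum_delta_r'.
  set Sa := \sum_l (p != l)%:R * al p l.
  set Sb := \sum_l (p != l)%:R * (de p l * Y l l).
  set Sc := \sum_l (p != l)%:R * (al l p * zz l p * Y l l).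
  set Sd := \sum_l (p != l)%:R * (de l p * zz l p).
  set SM := \sum_l M p l * Y l l.
  have P1 : \sum_l (p != l)%:R * (al p l * Y p p + de p l * Y l l) = Sa * Y p p + Sb.
    by rewrite /Sa /Sb mulr_suml -big_split /=; apply: eq_bigr => l _; ring.
  have P2 : \sum_k (k != p)%:R * ((al k p * Y k k + de k p * Y p p) * zz k p) = Sc + Sd * Y p p.
    by rewrite /Sc /Sd mulr_suml -big_split /=; apply: eq_bigr => l _; rewrite eq_sym; ring.
  have K : \sum_l (p != l)%:R * (al p l + de l p * zz l p) = Sa + Sd.
    by rewrite /Sa /Sd -big_split /=; apply: eq_bigr => l _; ring.
  have P3 : \sum_m Y m m * rho M p m = SM - Sb - Sc - Y p p * (Sa + Sd).
    rewrite -K -(sum_delta_l' p (fun m => Y m m * \sum_l (p != l)%:R * (al p l + de l p * zz l p))).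
    rewrite /SM /Sb /Sc -!sumrB; apply: eq_bigr => m _; rewrite /rho; ring.
  rewrite P1 P2 P3; ring.
have nqp : q != p by rewrite eq_sym.
have z0 : forall a, ((p == a) && (q == a)) = false.
  by move=> a; apply/negbTE; apply: contra npq => /andP [/eqP -> /eqP ->].
have d0z : forall a, (p == a)%:R * (q == a)%:R = 0 :> C by move=> a; rewrite nat_and z0.
rewrite [X in _ + X]big1 ?addr0; last first.
  by move=> a _; apply: big1 => m _; rewrite d0z !mulr0.
have split_sum : forall (F G H : 'I_d -> 'I_d -> C),
    (forall k l, H k l = F k l * ((p == k)%:R * (q == l)%:R) + G k l * ((p == l)%:R * (q == k)%:R)) ->
    \sum_k \sum_l H k l = F p q + G q p.
  move=> F G H hH; under eq_bigr => k _ do under eq_bigr => l _ do rewrite hH.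
  under eq_bigr => k _ do rewrite big_split /=.
  by rewrite big_split /= dsum1 dsum2.
have h1 := Hz _ _ npq; have h2 := Hzc _ _ nqp; rewrite HN // conjCK in h2.
case E : tau.
  rewrite (split_sum (fun k l => (k != l)%:R * (sx k l * sy k l * zc k l * Y l k))
                     (fun k l => (k != l)%:R * (sx k l * sy k l * (zc k l)^* * Y k l))).
    by rewrite npq nqp /= !mul1r h1 h2 -mulrDl -splitr.
  by move=> k l; rewrite /Tf E !d0z; ring.
rewrite (split_sum (fun k l => (k != l)%:R * (sx k l * sy k l * zc k l * Y k l))
                   (fun k l => (k != l)%:R * (sx k l * sy k l * (zc k l)^* * Y l k))).
  by rewrite npq nqp /= !mul1r h1 h2 -mulrDl -splitr.
by move=> k l; rewrite /Tf E !d0z; ring.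
Qed.


Lemma zzE k l : zz k l = N k l * (N k l)^* * (2^-1 * 2^-1) * ((sx k l * sy k l) * (sx k l * sy k l))^-1.
Proof.
have hx : (sx k l)^* = sx k l by apply: cS.
have hy : (sy k l)^* = sy k l by apply: cS.
rewrite /zz /zc !cM !cV !cM cn hx hy [(_ * _)^-1 in RHS]invfM.
move: (sx k l * sy k l)^-1 (2 : C)^-1 => v t; ring.
Qed.

Lemma uu k l : (sx k l * sy k l) * (sx k l * sy k l) = al k l * de k l.
Proof. by rewrite mulrACA -!expr2 !sqrtCK. Qed.

Lemma core_EB (M : 'M[C]_d) (Psi : 'M[C]_d -> 'M[C]_d) (be ga : 'I_d -> 'I_d -> C) :
  (forall Y p q, Psi Y p q = if p == q then \sum_m M p m * Y m m
                            else N p q * (if tau then Y q p else Y p q)) ->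
  (forall p q, p != q -> N q p = (N p q)^*) ->
  (forall k l, 0 <= be k l) -> (forall k l, 0 <= ga k l) ->
  (forall k l, k != l -> N k l * (N k l)^* / 4 <= be k l * al k l) ->
  (forall k l, k != l -> N k l * (N k l)^* / 4 <= ga k l * de k l) ->
  (forall p m, p != m -> de p m + ga m p <= M p m) ->
  (forall p, \sum_l (p != l)%:R * (al p l + be l p) <= M p p) ->
  entanglement_breaking Psi.
Proof.
move=> HPsi HN be0 ga0 hb hg hM1 hM2.
have N0 : forall k l, k != l -> al k l * de k l = 0 -> N k l = 0.
  move=> k l nkl /eqP; rewrite mulf_eq0 => /orP [] /eqP h0.
    have := hb k l nkl; rewrite h0 mulr0 => h.
    apply/eqP; rewrite -mul_conjC_eq0 eq_le mul_conjC_ge0 andbT.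
    by rewrite -(@ler_pM2r _ (4^-1)) ?mul0r // invr_gt0 ltr0n.
  have := hg k l nkl; rewrite h0 mulr0 => h.
  apply/eqP; rewrite -mul_conjC_eq0 eq_le mul_conjC_ge0 andbT.
  by rewrite -(@ler_pM2r _ (4^-1)) ?mul0r // invr_gt0 ltr0n.
have Hz : forall k l, k != l -> sx k l * sy k l * zc k l = N k l / 2.
  move=> k l nkl; rewrite /zc.
  have [u0|u0] := eqVneq (sx k l * sy k l) 0.
    rewrite u0 mul0r N0 ?mul0r //.
    by rewrite -uu u0 mul0r.
  by rewrite mulrC divfK.
have zz_al : forall k l, k != l -> al k l * zz k l <= ga k l.
  move=> k l nkl; have [u0|u0] := eqVneq (al k l * de k l) 0.
    rewrite zzE N0 // !mul0r mulr0; exact: ga0.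
  have hpos : 0 < de k l.
    rewrite lt_def de_ge0 andbT; apply: contra u0 => /eqP ->; by rewrite mulr0.
  have hapos : 0 < al k l.
    rewrite lt_def al_ge0 andbT; apply: contra u0 => /eqP ->; by rewrite mul0r.
  rewrite zzE uu.
  have -> : al k l * (N k l * (N k l)^* * (2^-1 * 2^-1) * (al k l * de k l)^-1) =
            N k l * (N k l)^* / 4 / de k l.
    rewrite invfM; field; rewrite ?pnatr_eq0 ?(gt_eqF hpos) ?(gt_eqF hapos) //.
  by rewrite ler_pdivrMr // hg.
have zz_de : forall k l, k != l -> de k l * zz k l <= be k l.
  move=> k l nkl; have [u0|u0] := eqVneq (al k l * de k l) 0.
    rewrite zzE N0 // !mul0r mulr0; exact: be0.
  have hpos : 0 < de k l.
    rewrite lt_def de_ge0 andbT; apply: contra u0 => /eqP ->; by rewrite mulr0.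
  have hapos : 0 < al k l.
    rewrite lt_def al_ge0 andbT; apply: contra u0 => /eqP ->; by rewrite mul0r.
  rewrite zzE uu.
  have -> : de k l * (N k l * (N k l)^* * (2^-1 * 2^-1) * (al k l * de k l)^-1) =
            N k l * (N k l)^* / 4 / al k l.
    rewrite invfM; field; rewrite ?pnatr_eq0 ?(gt_eqF hpos) ?(gt_eqF hapos) //.
  by rewrite ler_pdivrMr // hb.
have rho0 : forall p m, 0 <= rho M p m.
  move=> p m; rewrite /rho; case: eqVneq => [<-|npm] /=.
    rewrite mul0r subr0 mul1r subr_ge0; apply: le_trans (hM2 p).
    apply: ler_sum => l _; case: eqVneq => [<-|npl] /=; first by rewrite !mul0r.
    rewrite !mul1r lerD2l; apply: zz_de; by rewrite eq_sym.
  rewrite mul0r subr0 mul1r subr_ge0; apply: le_trans (hM1 p m npm).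
  rewrite lerD2l; apply: zz_al; by rewrite eq_sym.
move=> X hX.
apply: (@sep_mp _ Psi _ fI (QI M)) => //.
  case=> [[[k l] r]|[p m]] /=.
    by apply: psd_rank1; rewrite divr_ge0 ?ler0n.
  exact: psd_rank1.
exact: core_decomp.
Qed.

End Core.

Lemma prod_le (a b c e : C) : 0 <= a -> a <= b -> 0 <= c -> c <= e -> a * c <= b * e.
Proof. by move=> ha hab hc hce; apply: ler_pM. Qed.

Lemma main_gen d (A B C' D : 'M[C]_d) :
  (forall k : 'I_2, PPT (PhiI k A B) /\ PPT (PhiI k C' D)) ->
  forall i j : 'I_2, entanglement_breaking (PhiI i A B \o PhiI j C' D).
Proof.
move=> hP i j.
have [[cpA1 _] [cpC1 _]] := hP 0; have [[cpA2 _] [cpC2 _]] := hP 1.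
have [hA0 hBh hBd hBo] := pair_conds cpA1 cpA2.
have [hC0 hDh hDd hDo] := pair_conds cpC1 cpC2.
pose N := \matrix_(p, q) (B p q * (if i == 0 then D q p else D p q)).
pose al k l := A k l * C' l k / 2.
pose de k l := A k k * C' k l / 2.
pose ga k l := A l l * C' l k / 2.
pose be k l := A l k * C' k l / 2.
have ge2 : forall x y : C, 0 <= x -> 0 <= y -> 0 <= x * y / 2.
  by move=> x y hx hy; rewrite divr_ge0 ?mulr_ge0 ?ler0n.
have hD' : forall k l, k != l ->
    (if i == 0 then D l k else D k l) * (if i == 0 then D l k else D k l)^* <= C' k l * C' l k.
  move=> k l nkl; case: (i == 0) => /=; last exact: hDo nkl.
  by rewrite [C' k l * _]mulrC; apply: hDo; rewrite eq_sym.
have hNN : forall k l, N k l * (N k l)^* =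
    (B k l * (B k l)^*) * ((if i == 0 then D l k else D k l) * (if i == 0 then D l k else D k l)^*).
  by move=> k l; rewrite mxE cM; ring.
apply: (@core_EB d (i != j) N al de _ _ (A *m C') _ be ga).
- by move=> k l; apply: ge2.
- by move=> k l; apply: ge2.
- by move=> Y p q; rewrite compE mxE.
- move=> p q npq; rewrite !mxE cM hBh //.
  case: (i == 0); rewrite hDh ?conjCK //; by rewrite eq_sym.
- by move=> k l; apply: ge2.
- by move=> k l; apply: ge2.
- move=> k l nkl; rewrite hNN.
  have -> : be k l * al k l = (A k l * A l k) * (C' k l * C' l k) / 4.
    by rewrite /be /al; field.
  rewrite ler_wpM2r ?invr_ge0 ?ler0n //.
  apply: prod_le; rewrite ?mul_conjC_ge0 ?hBo ?hD' //.
- move=> k l nkl; rewrite hNN.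
  have -> : ga k l * de k l = (A k k * A l l) * (C' k l * C' l k) / 4.
    by rewrite /ga /de; field.
  rewrite ler_wpM2r ?invr_ge0 ?ler0n //.
  apply: prod_le; rewrite ?mul_conjC_ge0 ?hBd ?hD' //.
- move=> p m npm; rewrite /de /ga -splitr mxE (bigD1 p) //= lerDl.
  by apply: sumr_ge0 => n _; apply: mulr_ge0.
- move=> p; rewrite mxE; apply: ler_sum => l _; rewrite /al /be.
  case: eqVneq => [<-|npl] /=; first by rewrite mul0r mulr_ge0.
  by rewrite mul1r -splitr.
Qed.

End Work.

Unset Implicit Arguments.

Theorem theorem4p5 (R : realType) (d : nat) (A B C D : 'M[R[i]]_d) :
  (forall k : 'I_d, A k k = B k k) ->
  (forall k : 'I_d, C k k = D k k) ->
  (forall k : 'I_2, PPT (PhiI k A B) /\ PPT (PhiI k C D)) ->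
  forall i j : 'I_2, entanglement_breaking (PhiI i A B \o PhiI j C D).
Proof. by move=> _ _; apply: main_gen. Qed.
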